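(* Let $V_\theta$ be a real vector space of finite dimension $D\ge1$ and let $M\subset V_\theta\times[0,1]$ be a dichotomous item response hypersurface whose associated function $f:V_\theta\to[0,1]$ is not constant. Let $w,w'\in V_\theta$, and let $H_w,H_{w'}\subset V_\theta$ be affine hyperplanes (of dimension $D-1$) with $w\in H_w$, $w'\in H_{w'}$, such that $f$ is constant on $H_w$ and constant on $H_{w'}$. Then $H_w$ and $H_{w'}$ are parallel (i.e. they are translates of the same linear subspace).
   Context: A dichotomous item response hypersurface (IRHS) is a $D=\dim V_\theta$ dimensional smooth submanifold $M$ of $V_\theta\times[0,1]$ such that for any two vectors $v,w\in V_\theta$, the intersection of $(w+\mathbb{R}\cdot v)\times[0,1]$ with $M$ is the graph of a monotonic function $w+\mathbb{R}\cdot v\to[0,1]$, where $w+\mathbb{R}\cdot v=\{w+\lambda v:\lambda\in\mathbb{R}\}$. A function $g:w+\mathbb{R}\cdot v\to[0,1]$ is monotonic if either $g(w+\lambda v)\le g(w+\mu v)$ for all $\lambda\le\mu$, or $g(w+\lambda v)\ge g(w+\mu v)$ for all $\lambda\le\mu$. Taking $v=0$ shows $M$ is the graph of a function $f:V_\theta\to[0,1]$, the associated function. *)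

(* Defs.v *)
(* V_theta modelled as 'rV[R]_D for R : realType. *)
From HB Require Import structures.
From mathcomp Require Import all_boot all_order all_algebra.
From mathcomp Require Import classical_sets reals.
Set Implicit Arguments. Unset Strict Implicit. Unset Printing Implicit Defensive.
Import Order.TTheory GRing.Theory Num.Theory.
Local Open Scope ring_scope.
Local Open Scope classical_set_scope.

Definition monotonic_on_line (R : realType) (D : nat) (g : 'rV[R]_D -> R)
  (w v : 'rV[R]_D) : Prop :=
  (forall l m : R, l <= m -> g (w + l *: v) <= g (w + m *: v)) \/
  (forall l m : R, l <= m -> g (w + m *: v) <= g (w + l *: v)).

Definition IRHS (R : realType) (D : nat) (M : set ('rV[R]_D * R)) : Prop :=
  (forall p, M p -> 0 <= p.2 <= 1) /\
  forall w v : 'rV[R]_D, exists g : 'rV[R]_D -> R,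
    (forall (l : R) (y : R), M (w + l *: v, y) <-> y = g (w + l *: v)) /\
    (forall l : R, 0 <= g (w + l *: v) <= 1) /\
    monotonic_on_line g w v.

Definition affine_through (R : realType) (D : nat) (w : 'rV[R]_D)
  (U : {vspace 'rV[R]_D}) : set 'rV[R]_D := [set x | x - w \in U].

Definition constant_on (R : realType) (D : nat) (f : 'rV[R]_D -> R)
  (H : set 'rV[R]_D) : Prop := exists c : R, forall x, H x -> f x = c.

(* Main.v *)
Require Import Defs.
From HB Require Import structures.
From mathcomp Require Import all_boot all_order all_algebra.
From mathcomp Require Import classical_sets reals.
From mathcomp Require Import ring.
Import Order.TTheory GRing.Theory Num.Theory.
Local Open Scope ring_scope.

Theorem lemma5 (R : realType) (D : nat) (M : set ('rV[R]_D * R))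
  (f : 'rV[R]_D -> R) (w w' : 'rV[R]_D) (U U' : {vspace 'rV[R]_D}) :
  (0 < D)%N ->
  IRHS M ->
  (forall (x : 'rV[R]_D) (y : R), M (x, y) <-> y = f x) ->
  (exists x y : 'rV[R]_D, f x != f y) ->
  \dim U = D.-1 -> \dim U' = D.-1 ->
  constant_on f (affine_through w U) ->
  constant_on f (affine_through w' U') ->
  U = U'.
Proof.
move=> D0 [_ HM] Mf [x0 [y0 Hxy]] dU dU' [c Hc] [c' Hc'].
have [//|neq] := eqVneq U U'; exfalso.
have notsub : ~~ (U' <= U)%VS.
  apply/negP => sub; move/negP: neq; apply.
  by rewrite eq_sym eqEdim sub dU dU' leqnn.
have full : (U + U')%VS = fullv.
  have dF : \dim (fullv : {vspace 'rV[R]_D}) = D by rewrite dimvf dim_matrix mul1r.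
  apply/eqP; rewrite eqEdim subvf /= dF.
  case: (ltnP (\dim U) (\dim (U + U'))) => h.
    by rewrite dU in h; apply: leq_trans h; rewrite prednK.
  exfalso; move: notsub; rewrite (_ : U' <= U = true)%VS //.
  have e : U == (U + U')%VS by rewrite eqEdim h addvSl.
  by rewrite (eqP e) addvSr.
have dec : forall x, exists u, exists u', [/\ u \in U, u' \in U' & x = u + u'].
  move=> x; have : x \in (U + U')%VS by rewrite full memvf.
  by case/memv_addP => u uU [u' u'U ->]; exists u, u'.
have [u0 [u0' [u0U u0'U e0]]] := dec (w - w').
pose p := w - u0.
have fpc : f p = c by apply: Hc; rewrite /affine_through /= /p addrAC subrr add0r rpredN.
have fpc' : f p = c'.
  apply: Hc'; rewrite /affine_through /= /p.
  have -> : w - u0 - w' = u0'.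
    apply/rowP => i; rewrite !mxE.
    have := congr1 (fun m : 'rV[R]_D => m 0 i) e0; rewrite /= !mxE => h.
    rewrite -[w 0 i](subrK (w' 0 i)) h; ring.
  done.
have key : forall x, f x = c.
  move=> x; have [u [u' [uU u'U ex]]] := dec (x - p).
  pose a := p + u + u; pose v := u' - u.
  have fa : f a = c.
    apply: Hc; rewrite /affine_through /= /a /p.
    have -> : w - u0 + u + u - w = - u0 + u + u by apply/rowP => i; rewrite !mxE; ring.
    by rewrite !rpredD ?rpredN.
  have fb : f (a + 2%:R *: v) = c.
    rewrite -fpc fpc'; apply: Hc'.
    rewrite /affine_through /=.
    have -> : a + 2%:R *: v - w' = u0' + u' + u'.
      rewrite /a /v /p; apply/rowP => i; rewrite !mxE.
      have := congr1 (fun m : 'rV[R]_D => m 0 i) e0; rewrite /= !mxE => h.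
      rewrite -[w 0 i](subrK (w' 0 i)) h; ring.
    by rewrite !rpredD.
  have fx : f (a + 1 *: v) = f x.
    congr f; rewrite /a /v; apply/rowP => i; rewrite !mxE.
    have := congr1 (fun m : 'rV[R]_D => m 0 i) ex; rewrite /= !mxE => h.
    have hx : x 0 i = u 0 i + u' 0 i + (w 0 i - u0 0 i) by rewrite -h; ring.
    rewrite hx; ring.
  have fa0 : f (a + 0 *: v) = c by rewrite scale0r addr0.
  have [g [Hg [_ Hmon]]] := HM a v.
  have fg : forall l, f (a + l *: v) = g (a + l *: v).
    by move=> l; apply/(Hg l); apply/Mf.
  rewrite -fx; rewrite fg in fa0; rewrite fg in fb; rewrite fg.
  case: Hmon => Hm.
    have h1 := Hm 0 1 ler01.
    have h2 : g (a + 1 *: v) <= g (a + 2%:R *: v) by apply: Hm; rewrite ler1n.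
    by apply/eqP; rewrite eq_le; rewrite fa0 in h1; rewrite fb in h2; rewrite h1 h2.
  have h1 := Hm 0 1 ler01.
  have h2 : g (a + 2%:R *: v) <= g (a + 1 *: v) by apply: Hm; rewrite ler1n.
  by apply/eqP; rewrite eq_le; rewrite fa0 in h1; rewrite fb in h2; rewrite h1 h2.
by move: Hxy; rewrite !key eqxx.
Qed.
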